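(* Let $\Omega=\{P_1,\dots,P_n\}\subseteq\mathbb{F}[x;\sigma,\delta]$ be a set of $n$ distinct skew polynomials of degree at least $1$ with $I(\Omega)\ne\{0\}$, and let $N=\deg(F_\Omega)$. For $F\in\mathbb{F}[x;\sigma,\delta]$ and a non-zero $P$, let $F(P)$ denote the remainder of the right Euclidean division of $F$ by $P$ (so $\deg F(P)<\deg P$), viewed as an element of the left module $\mathbb{F}[x;\sigma,\delta]/(P)$, where $(P)$ is the left ideal generated by $P$. The following are equivalent: (1) $\Omega$ is P-independent; (2) the left $\mathbb{F}$-linear map $\phi:\mathbb{F}[x;\sigma,\delta]_N\to\prod_{i=1}^n\mathbb{F}[x;\sigma,\delta]/(P_i)$, $\phi(F)=(F(P_i))_{i=1}^n$, is an isomorphism of left vector spaces, where $\mathbb{F}[x;\sigma,\delta]_N=\{F:\deg F<N\}$; (3) the left $\mathbb{F}$-linear map $\psi:\mathbb{F}[x;\sigma,\delta]\to\prod_{i=1}^n\mathbb{F}[x;\sigma,\delta]/(P_i)$, $\psi(F)=(F(P_i))_{i=1}^n$, is surjective.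
   Context: Let $\mathbb{F}$ be a division ring, $\sigma$ a ring endomorphism of $\mathbb{F}$ and $\delta$ a $\sigma$-derivation. $\mathbb{F}[x;\sigma,\delta]$ is the skew polynomial ring (left $\mathbb{F}$-vector space with basis $\{x^i\}$, $xa=\sigma(a)x+\delta(a)$), a domain with additive degree and right Euclidean division. For a set $\Omega$ of skew polynomials, $I(\Omega)$ is the left ideal of all $F$ right-divisible by every element of $\Omega$, and $F_\Omega$ is its monic generator of minimal degree (or $0$ if $I(\Omega)=\{0\}$). $\Omega$ is P-independent if it is finite, $I(\Omega)\ne\{0\}$ and $\deg F_\Omega=\sum_{P\in\Omega}\deg P$. *)

(* Defs.v *)
From HB Require Import structures.
From mathcomp Require Import all_boot all_order all_algebra.
Set Implicit Arguments. Unset Strict Implicit. Unset Printing Implicit Defensive.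
Import GRing.Theory.
Local Open Scope ring_scope.

Definition is_division_ring (F : unitRingType) : Prop :=
  forall a : F, a != 0 -> a \is a GRing.unit.

(* delta is a sigma-derivation: additive and delta(ab) = sigma(a) delta(b) + delta(a) b,
   which is the rule compatible with x a = sigma(a) x + delta(a). *)
Definition is_sigma_derivation (F : unitRingType) (sigma : F -> F) (delta : F -> F) : Prop :=
  (forall a b, delta (a + b) = delta a + delta b) /\
  (forall a b, delta (a * b) = sigma a * delta b + delta a * b).

(* Skew polynomials are represented by their coefficient sequence (left
   coefficients, basis x^i), i.e. as elements of {poly F} with the
   additive structure and left F-scaling of {poly F}; only the
   multiplication is replaced by the skew multiplication below. *)
Section Skew.
Variables (F : unitRingType) (sigma : F -> F) (delta : F -> F).

(* left multiplication by x : x * (sum b_j x^j) = sum (sigma b_j x^(j+1) + delta b_j x^j) *)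
Definition skxmul (q : {poly F}) : {poly F} :=
  'X * map_poly sigma q + map_poly delta q.

Definition skmul (p q : {poly F}) : {poly F} :=
  \sum_(i < size p) p`_i *: iter i skxmul q.

(* right Euclidean division: remainder of F by P (long division, P <> 0).
   Leading term of (c x^k) * P is c * sigma^k(lead P) x^(k + deg P). *)
Fixpoint skrem_rec (k : nat) (G P : {poly F}) : {poly F} :=
  match k with
  | 0 => G
  | k'.+1 =>
      if (size G < size P)%N then G
      else skrem_rec k'
             (G - skmul ((lead_coef G * (iter (size G - size P) sigma (lead_coef P))^-1)
                           *: 'X^(size G - size P)) P) P
  end.

Definition skrem (G P : {poly F}) : {poly F} := skrem_rec (size G) G P.

Definition skrdvd (P G : {poly F}) : Prop := exists Q, G = skmul Q P.

Definition in_I (n : nat) (Ps : 'I_n -> {poly F}) (G : {poly F}) : Prop :=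
  forall i, skrdvd (Ps i) G.

Definition is_FOmega (n : nat) (Ps : 'I_n -> {poly F}) (G : {poly F}) : Prop :=
  [/\ G \is monic, in_I Ps G &
      forall H, H != 0 -> in_I Ps H -> (size G <= size H)%N].

Definition P_independent (n : nat) (Ps : 'I_n -> {poly F}) : Prop :=
  (exists2 H, H != 0 & in_I Ps H) /\
  exists2 G, is_FOmega Ps G & (size G).-1 = (\sum_(i < n) (size (Ps i)).-1)%N.

End Skew.

(* Main.v *)
Require Import Defs.
From HB Require Import structures.
From mathcomp Require Import all_boot all_order all_algebra.
From Stdlib Require Import Classical.
Set Implicit Arguments. Unset Strict Implicit. Unset Printing Implicit Defensive.
Import GRing.Theory.
Local Open Scope ring_scope.

Lemma gtsz (R : nzSemiRingType) (p : {poly R}) i : p`_i != 0 -> (i < size p)%N.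
Proof. by rewrite ltnNge; apply: contra => /leq_sizeP/(_ i (leqnn i))->. Qed.

Section Skew.
Variables (F : unitRingType) (sigma : {rmorphism F -> F}) (delta : F -> F).
Hypothesis D : is_division_ring F.
Hypothesis SD : is_sigma_derivation sigma delta.

Local Notation sx := (skxmul sigma delta).
Local Notation xp i q := (iter i sx q).
Local Notation sm := (skmul sigma delta).

Lemma deltaD a b : delta (a + b) = delta a + delta b. Proof. exact: SD.1. Qed.
Lemma deltaM a b : delta (a * b) = sigma a * delta b + delta a * b.
Proof. exact: SD.2. Qed.
Lemma delta0 : delta 0 = 0.
Proof. by apply: (@addrI _ (delta 0)); rewrite -deltaD !addr0. Qed.

Lemma mulf_neq0D (a b : F) : a != 0 -> b != 0 -> a * b != 0.
Proof.
move=> a0 b0; apply: contra b0 => /eqP ab.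
by rewrite -(mulKr (D a0) b) ab mulr0.
Qed.

Lemma sigma_neq0 a : a != 0 -> sigma a != 0.
Proof.
move=> a0; apply/negP => /eqP h.
by have := rmorph_unit sigma (D a0); rewrite h unitr0.
Qed.

Lemma iter_sigma_neq0 i a : a != 0 -> iter i sigma a != 0.
Proof. by move=> a0; elim: i => //= i IH; apply: sigma_neq0. Qed.

Lemma coef_sx (q : {poly F}) k :
  (sx q)`_k = (if k == 0%N then 0 else sigma q`_k.-1) + delta q`_k.
Proof.
rewrite /skxmul coefD coefXM (coef_map_id0 _ _ delta0).
by case: (k == 0%N) => //; rewrite coef_map.
Qed.

Lemma sxD (p q : {poly F}) : sx (p + q) = sx p + sx q.
Proof.
apply/polyP => k; rewrite [RHS]coefD !coef_sx !coefD deltaD.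
by case: (k == 0%N); rewrite ?add0r ?rmorphD // addrACA.
Qed.

Lemma sx0 : sx 0 = 0.
Proof. by apply/polyP => k; rewrite coef_sx !coef0 rmorph0 delta0 addr0; case: ifP. Qed.

Lemma sxZ a (q : {poly F}) : sx (a *: q) = sigma a *: sx q + delta a *: q.
Proof.
apply/polyP => k; rewrite [RHS]coefD !coefZ !coef_sx !coefZ deltaM mulrDr addrA.
by case: (k == 0%N); rewrite ?mulr0 ?add0r ?rmorphM.
Qed.

Lemma size_sx_le (q : {poly F}) : (size (sx q) <= (size q).+1)%N.
Proof.
apply/leq_sizeP => j hj; rewrite coef_sx !nth_default ?delta0 ?addr0 ?rmorph0 //.
- by case: ifP.
- exact: ltnW.
- by case: j hj.
Qed.

Lemma size_sx (q : {poly F}) : q != 0 ->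
  size (sx q) = (size q).+1 /\ lead_coef (sx q) = sigma (lead_coef q).
Proof.
move=> q0.
have hc : (sx q)`_(size q) = sigma (lead_coef q).
  rewrite coef_sx lead_coefE (nth_default _ (leqnn (size q))) delta0 addr0.
  by rewrite -[_ == _]negbK -lt0n size_poly_gt0 q0.
have hs : size (sx q) = (size q).+1.
  apply/eqP; rewrite eqn_leq size_sx_le gtsz // hc sigma_neq0 //.
  by rewrite lead_coef_eq0.
by split => //; rewrite lead_coefE hs.
Qed.

Lemma size_xp i (q : {poly F}) : q != 0 ->
  size (xp i q) = (size q + i)%N /\ lead_coef (xp i q) = iter i sigma (lead_coef q).
Proof.
move=> q0; elim: i => [|i [IHs IHl]] /=; first by rewrite addn0.
have xq0 : xp i q != 0 by rewrite -size_poly_gt0 IHs addn_gt0 size_poly_gt0 q0.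
by have [-> ->] := size_sx xq0; rewrite IHs IHl addnS.
Qed.

Lemma skmulE (p q : {poly F}) m : (size p <= m)%N -> sm p q = \sum_(i < m) p`_i *: xp i q.
Proof.
move=> h; rewrite /skmul (big_ord_widen m (fun i => p`_i *: xp i q) h) big_mkcond.
apply: eq_bigr => i _; case: ifP => // /negbT; rewrite -leqNgt => h'.
by rewrite nth_default // scale0r.
Qed.

Lemma sm0 (q : {poly F}) : sm 0 q = 0.
Proof. by rewrite /skmul size_poly0 big_ord0. Qed.

Lemma smD (p p' q : {poly F}) : sm (p + p') q = sm p q + sm p' q.
Proof.
pose m := maxn (size p) (size p').
rewrite !(@skmulE _ _ m) ?leq_maxl ?leq_maxr ?size_polyD //.
by rewrite -big_split; apply: eq_bigr => i _; rewrite coefD scalerDl.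
Qed.

Lemma smZ a (p q : {poly F}) : sm (a *: p) q = a *: sm p q.
Proof.
rewrite !(@skmulE _ _ (size p)) ?size_scale_leq // scaler_sumr.
by apply: eq_bigr => i _; rewrite coefZ scalerA.
Qed.

Lemma smN (p q : {poly F}) : sm (- p) q = - sm p q.
Proof. by rewrite -scaleN1r smZ scaleN1r. Qed.

Lemma smB (p p' q : {poly F}) : sm (p - p') q = sm p q - sm p' q.
Proof. by rewrite smD smN. Qed.

Lemma sm_sum (I : Type) (r : seq I) (P : pred I) (f : I -> {poly F}) q :
  sm (\sum_(i <- r | P i) f i) q = \sum_(i <- r | P i) sm (f i) q.
Proof. exact: (big_morph (fun p => sm p q) (fun p p' => smD p p' q) (sm0 q)). Qed.

Lemma smXn c k (q : {poly F}) : sm (c *: 'X^k) q = c *: xp k q.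
Proof.
rewrite (@skmulE _ _ k.+1); last by apply: leq_trans (size_scale_leq _ _) _; rewrite size_polyXn.
rewrite big_ord_recr /= big1 ?add0r; first by rewrite coefZ coefXn eqxx mulr1.
by move=> i _; rewrite coefZ coefXn /= ltn_eqF ?mulr0 ?scale0r.
Qed.

Lemma size_sm (p q : {poly F}) : p != 0 -> q != 0 -> size (sm p q) = (size p + size q).-1.
Proof.
move=> p0 q0; rewrite /skmul.
have := polySpred p0; set s := (size p).-1 => sp.
rewrite sp big_ord_recr /=.
have [xs xl] := size_xp s q0.
have lp : p`_s = lead_coef p by rewrite lead_coefE.
have last : size (p`_s *: xp s q) = (size q + s)%N.
  by rewrite lreg_size ?xs //; rewrite lp; apply/mulrI/D; rewrite lead_coef_eq0.
rewrite addrC size_polyDl last; first by rewrite addnC.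
apply: (big_ind (fun x : {poly F} => (size x < size q + s)%N)).
- by rewrite size_poly0 addn_gt0 size_poly_gt0 q0.
- by move=> x y hx hy; apply: leq_ltn_trans (size_polyD _ _) _; rewrite gtn_max hx hy.
move=> i _; apply: leq_ltn_trans (size_scale_leq _ _) _.
by rewrite (size_xp i q0).1 ltn_add2l ltn_ord.
Qed.


Lemma size_sub_lead (A B : {poly F}) : (size B <= size A)%N -> (0 < size A)%N ->
  B`_((size A).-1) = A`_((size A).-1) -> (size (A - B)%R < size A)%N.
Proof.
move=> hBA hA hc.
have: (size (A - B)%R <= (size A).-1)%N.
  apply/leq_sizeP => j hj; rewrite coefB.
  have [->|ne] := eqVneq j (size A).-1; first by rewrite hc subrr.
  have hj' : (size A <= j)%N by rewrite -(prednK hA) ltn_neqAle eq_sym ne hj.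
  by rewrite !nth_default ?subrr //; apply: leq_trans hj'.
by move/leq_ltn_trans; apply; rewrite prednK.
Qed.

Lemma skrem_recP (P : {poly F}) : P != 0 -> forall k (A : {poly F}), (size A <= k)%N ->
  exists Q, A = sm Q P + skrem_rec sigma delta k A P /\
            (size (skrem_rec sigma delta k A P) < size P)%N.
Proof.
move=> P0; elim=> [|k IH] A hA /=.
  exists 0; rewrite sm0 add0r; split => //.
  by move: hA; rewrite leqn0 => /eqP ->; rewrite size_poly_gt0.
case: ifP => hlt; first by exists 0; rewrite sm0 add0r.
move/negbT: hlt; rewrite -leqNgt => hPA.
set m := (size A - size P)%N.
set t := iter m sigma (lead_coef P).
set c := lead_coef A * t^-1.
have t0 : t != 0 by apply: iter_sigma_neq0; rewrite lead_coef_eq0.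
have [xs xl] := size_xp m P0.
have hsz : (size P + m)%N = size A by rewrite /m subnKC.
have A0 : (0 < size A)%N by apply: leq_trans hPA; rewrite size_poly_gt0.
have hlt : (size (A - c *: xp m P)%R < size A)%N.
  apply: size_sub_lead => //.
    by apply: leq_trans (size_scale_leq _ _) _; rewrite xs hsz.
  rewrite coefZ -{1}hsz -xs -lead_coefE xl -/t /c mulrVK ?lead_coefE //.
  exact: D.
rewrite smXn.
have [Q [HQ HR]] := IH (A - c *: xp m P) (leq_trans hlt hA).
exists (Q + c *: 'X^m); split => //.
by rewrite smD smXn -addrA (addrC (c *: _)) addrA -HQ subrK.
Qed.


Local Notation skr := (skrem sigma delta).

Lemma skremP (A P : {poly F}) : P != 0 ->
  exists Q, A = sm Q P + skr A P /\ (size (skr A P) < size P)%N.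
Proof. by move=> P0; apply: skrem_recP. Qed.

Lemma skrem_uniq (A P Q R : {poly F}) : P != 0 -> (size R < size P)%N ->
  A = sm Q P + R -> skr A P = R.
Proof.
move=> P0 hR hA; have [Q' [HQ' HR']] := skremP A P0.
have e : sm (Q - Q') P = skr A P - R.
  have e0 : sm Q P + R = sm Q' P + skr A P by rewrite -hA -HQ'.
  by apply/eqP; rewrite smB subr_eq addrAC eq_sym subr_eq e0 addrC.
have [hQ|nQ] := eqVneq (Q - Q') 0.
  by move: e; rewrite hQ sm0 => /eqP; rewrite eq_sym subr_eq0 => /eqP.
exfalso; have := congr1 (fun p : {poly F} => size p) e; rewrite size_sm // => {}e.
have : (size (skr A P - R)%R < size P)%N.
  by apply: leq_ltn_trans (size_polyD _ _) _; rewrite size_polyN gtn_max HR' hR.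
rewrite -e -subn1 ltn_subLR; last by rewrite addn_gt0 size_poly_gt0 nQ.
rewrite ltn_add2r ltnNge => /negP; apply.
by rewrite size_poly_gt0.
Qed.

Lemma skremL a (A B P : {poly F}) : P != 0 ->
  skr (a *: A + B) P = a *: skr A P + skr B P.
Proof.
move=> P0; have [QA [HA RA]] := skremP A P0; have [QB [HB RB]] := skremP B P0.
apply: (@skrem_uniq _ _ (a *: QA + QB)) => //.
  apply: leq_ltn_trans (size_polyD _ _) _; rewrite gtn_max RB andbT.
  exact: leq_ltn_trans (size_scale_leq _ _) RA.
by rewrite smD smZ {1}HA {1}HB scalerDr addrACA.
Qed.

Lemma skrem0 (P : {poly F}) : P != 0 -> skr 0 P = 0.
Proof. by move=> P0; apply: (@skrem_uniq _ _ 0); rewrite ?sm0 ?addr0 ?size_poly0 ?size_poly_gt0. Qed.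

Lemma skremB (A B P : {poly F}) : P != 0 -> skr (A - B) P = skr A P - skr B P.
Proof.
move=> P0; rewrite -[A - B]addrC -scaleN1r skremL // scaleN1r addrC //.
Qed.

Lemma skrem_sum (I : Type) (r : seq I) (Pr : pred I) (f : I -> {poly F}) (l : I -> F) P :
  P != 0 -> skr (\sum_(i <- r | Pr i) l i *: f i) P = \sum_(i <- r | Pr i) l i *: skr (f i) P.
Proof.
move=> P0; elim: r => [|x r IH]; first by rewrite !big_nil skrem0.
rewrite !big_cons; case: (Pr x) => //.
by rewrite skremL // IH.
Qed.

Lemma skrem_small (A P : {poly F}) : (size A < size P)%N -> skr A P = A.
Proof.
move=> h; apply: (@skrem_uniq _ _ 0) => //; last by rewrite sm0 add0r.
by rewrite -size_poly_gt0; apply: leq_ltn_trans h.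
Qed.

Lemma skrem_dvd (A P : {poly F}) : P != 0 -> skr A P = 0 <-> skrdvd sigma delta P A.
Proof.
move=> P0; split.
  by move=> h; have [Q [HQ _]] := skremP A P0; exists Q; rewrite HQ h addr0.
case=> Q ->; apply: (@skrem_uniq _ _ Q); rewrite ?addr0 // size_poly0.
by rewrite size_poly_gt0.
Qed.

Lemma sx_sum (I : Type) (r : seq I) (Pr : pred I) (f : I -> {poly F}) :
  sx (\sum_(i <- r | Pr i) f i) = \sum_(i <- r | Pr i) sx (f i).
Proof. exact: (big_morph sx sxD sx0). Qed.

Lemma sx_sm (q r : {poly F}) : sx (sm q r) = sm (sx q) r.
Proof.
rewrite (@skmulE (sx q) r (size q).+1) ?size_sx_le // /skmul sx_sum.
under eq_bigr do rewrite sxZ.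
rewrite big_split /=.
under [in RHS]eq_bigr do rewrite coef_sx scalerDl.
rewrite big_split /= big_ord_recl big_ord_recr /= scale0r add0r.
rewrite (nth_default _ (leqnn _)) delta0 scale0r addr0.
by [].
Qed.

Lemma xp_sm k (q r : {poly F}) : xp k (sm q r) = sm (xp k q) r.
Proof. by elim: k => //= k ->; rewrite sx_sm. Qed.

Lemma sm_assoc (p q r : {poly F}) : sm p (sm q r) = sm (sm p q) r.
Proof.
have -> : sm (sm p q) r = \sum_(i < size p) sm (p`_i *: xp i q) r.
  by rewrite -sm_sum.
rewrite /skmul; apply: eq_bigr => i _.
by rewrite -/(sm q r) -/(sm _ r) xp_sm smZ.
Qed.

End Skew.
Section LinAlg.
Variable (F : unitRingType).
Hypothesis D : is_division_ring F.

Lemma indep_le_ord : forall b a (u : 'I_a -> 'I_b -> F),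
  (forall l : 'I_a -> F, (forall j, \sum_i l i * u i j = 0) -> forall i, l i = 0) ->
  (a <= b)%N.
Proof.
elim=> [|b IH] a u Hu.
  case: a u Hu => // a u Hu.
  have := Hu (fun _ => 1) (fun j => match j with Ordinal _ h => False_ind _ (notF h) end).
  by move=> /(_ ord0) /eqP; rewrite oner_eq0.
have [/existsP[k Hk]|H0] := boolP [exists i, u i ord_max != 0]; last first.
  have H0' : forall i, u i ord_max = 0.
    by move=> i; apply/eqP; move/existsPn: H0 => /(_ i); rewrite negbK.
  apply: leqW; apply: (IH a (fun i j => u i (lift ord_max j))) => l Hl j.
  apply: Hu => j'; case: (unliftP ord_max j') => [j''|] ->; first exact: Hl.
  by rewrite big1 // => i _; rewrite H0' mulr0.
destruct a as [|a]; first by move: k Hk; case.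
set c := u k ord_max.
have cU : c \is a GRing.unit by apply: D.
rewrite ltnS.
apply: (IH a (fun i j => u (lift k i) (lift ord_max j)
     - u (lift k i) ord_max * c^-1 * u k (lift ord_max j))) => l Hl.
set mu := - (\sum_i l i * u (lift k i) ord_max) * c^-1.
pose L : 'I_a.+1 -> F := fun i => if unlift k i is Some i' then l i' else mu.
have HL : forall j, \sum_i L i * u i j = 0.
  move=> j; rewrite (bigD1_ord k) //= /L unlift_none.
  under eq_bigr do rewrite liftK.
  case: (unliftP ord_max j) => [j'|] ->.
    have := Hl j' => /=.
    under eq_bigr do rewrite mulrBr !mulrA.
    rewrite sumrB -!mulr_suml /mu mulNr => H.
    rewrite !mulNr addrC. exact H.
  by rewrite /mu mulrVK // addNr.
move=> i; have := Hu L HL (lift k i).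
by rewrite /L liftK.
Qed.

Lemma indep_le (J : finType) a (u : 'I_a -> J -> F) :
  (forall l : 'I_a -> F, (forall j, \sum_i l i * u i j = 0) -> forall i, l i = 0) ->
  (a <= #|J|)%N.
Proof.
move=> Hu; apply: (indep_le_ord (u := fun i j => u i (enum_val j))) => l Hl.
apply: Hu => j; have := Hl (enum_rank j); by rewrite enum_rankK.
Qed.

End LinAlg.

Lemma size_sum_le (R : nzSemiRingType) (I : Type) (r : seq I) (P : pred I)
  (f : I -> {poly R}) m :
  (forall i, P i -> (size (f i) <= m)%N) -> (size (\sum_(i <- r | P i) f i)%R <= m)%N.
Proof.
move=> h; apply: (big_ind (fun x : {poly R} => (size x <= m)%N)) => //.
  by rewrite size_poly0.
by move=> x y hx hy; apply: leq_trans (size_polyD _ _) _; rewrite geq_max hx hy.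
Qed.

Lemma ltn_leq_pred a b : (a < b)%N -> (a <= b.-1)%N.
Proof. by case: b. Qed.

Section Main.
Variables (F : unitRingType) (sigma : {rmorphism F -> F}) (delta : F -> F).
Hypothesis D : is_division_ring F.
Hypothesis SD : is_sigma_derivation sigma delta.
Variables (n : nat) (Ps : 'I_n -> {poly F}) (G : {poly F}).
Hypothesis Psz : forall i, (1 < size (Ps i))%N.
Hypothesis FO : is_FOmega sigma delta Ps G.

Local Notation sm := (skmul sigma delta).
Local Notation skr := (skrem sigma delta).
Local Notation N := (size G).-1.
Local Notation d i := (size (Ps i)).-1.
Local Notation S := (\sum_(i < n) d i)%N.

Lemma Ps0 i : Ps i != 0.
Proof. by rewrite -size_poly_gt0; apply: ltn_trans (Psz i). Qed.

Lemma G0 : G != 0.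
Proof. by case: FO => /monic_neq0. Qed.

Lemma I_closed (Q : {poly F}) : in_I sigma delta Ps (sm Q G).
Proof.
case: FO => _ HI _ i; have [S' ->] := HI i.
by exists (sm Q S'); rewrite (sm_assoc SD).
Qed.

Lemma ker0 (B : {poly F}) : (size B <= N)%N -> (forall i, skr B (Ps i) = 0) -> B = 0.
Proof.
move=> hB h; have [//|B0] := eqVneq B 0; exfalso.
have HI : in_I sigma delta Ps B by move=> i; apply/(skrem_dvd D SD B (Ps0 i))/h.
case: FO => _ _ /(_ B B0 HI) hGB.
have := leq_trans hGB hB; have : (0 < size G)%N by rewrite size_poly_gt0 G0.
by case: (size G) => //= k; rewrite ltnn.
Qed.

Lemma inj_phi (A B : {poly F}) : (size A <= N)%N -> (size B <= N)%N ->
  (forall i, skr A (Ps i) = skr B (Ps i)) -> A = B.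
Proof.
move=> hA hB h; apply/eqP; rewrite -subr_eq0; apply/eqP; apply: ker0.
  by apply: leq_trans (size_polyD _ _) _; rewrite size_polyN geq_max hA hB.
by move=> i; rewrite (skremB D SD _ _ (Ps0 i)) h subrr.
Qed.

Definition J := {i : 'I_n & 'I_(d i)}.

Lemma cardJ : #|{: J}| = S.
Proof. by rewrite card_tagged sumnE big_map big_enum; apply: eq_bigr => i _; rewrite card_ord. Qed.

Definition cR (Rs : 'I_n -> {poly F}) (j : J) := (Rs (tag j))`_(tagged j).

Lemma coord_eq (Rs Rs' : 'I_n -> {poly F}) :
  (forall i, size (Rs i) <= d i)%N -> (forall i, size (Rs' i) <= d i)%N ->
  (forall j, cR Rs j = cR Rs' j) -> forall i, Rs i = Rs' i.
Proof.
move=> h h' e i; apply/polyP => k.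
have [hk|hk] := ltnP k (d i).
  exact: (e (Tagged (fun i => 'I_(d i)) (Ordinal hk))).
by rewrite !nth_default //; apply: leq_trans hk.
Qed.

Lemma size_skr (A : {poly F}) i : (size (skr A (Ps i)) <= d i)%N.
Proof. by apply: ltn_leq_pred; have [Q [_ ->]] := skremP D SD A (Ps0 i). Qed.

Lemma cR_comb m (l : 'I_m -> F) (f : 'I_m -> {poly F}) j :
  cR (fun i => skr (\sum_(k < m) l k *: f k) (Ps i)) j =
  \sum_(k < m) l k * cR (fun i => skr (f k) (Ps i)) j.
Proof.
rewrite /cR (skrem_sum D SD _ _ _ _ (Ps0 _)) coef_sum.
by apply: eq_bigr => k _; rewrite coefZ.
Qed.

Lemma coefXsum m (l : 'I_m -> F) (k : 'I_m) : (\sum_(i < m) l i *: 'X^i)`_k = l k.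
Proof.
rewrite coef_sum (bigD1 k) //= coefZ coefXn eqxx mulr1 big1 ?addr0 //.
move=> i ne; rewrite coefZ coefXn eq_sym.
have -> : (i == k :> nat) = false by exact: negbTE ne.
by rewrite mulr0.
Qed.

Lemma size_Xsum m (l : 'I_m -> F) : (size (\sum_(i < m) l i *: 'X^i)%R <= m)%N.
Proof.
apply: size_sum_le => i _; apply: leq_trans (size_scale_leq _ _) _.
by rewrite size_polyXn ltn_ord.
Qed.

Lemma N_le_S : (N <= S)%N.
Proof.
rewrite -cardJ.
apply: (@indep_le _ D _ _ (fun (m : 'I_N) j => cR (fun i => skr 'X^m (Ps i)) j)) => l Hl.
set B := \sum_(m < N) l m *: 'X^m.
have B0 : B = 0.
  apply: ker0; first exact: size_Xsum.
  apply: (coord_eq (Rs' := fun _ => 0)) => [i|i|j]; rewrite ?size_poly0 ?size_skr //.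
  by rewrite cR_comb Hl /cR coef0.
by move=> m; rewrite -(coefXsum l m) -/B B0 coef0.
Qed.


Definition E (j : J) (i : 'I_n) : {poly F} :=
  if tag j == i then 'X^(tagged j) else 0.

Lemma coefE (j : J) i0 (k0 : 'I_(d i0)) :
  (E j i0)`_k0 = (j == Tagged (fun i => 'I_(d i)) k0)%:R.
Proof.
case: j => i1 k1; rewrite /E /=.
have [e|ne] := eqVneq i1 i0.
  subst i1; rewrite coefXn eq_Tagged /=.
  by congr (_%:R); rewrite eq_sym.
rewrite coef0; case: eqP => // /(congr1 tag) /= e.
by rewrite e eqxx in ne.
Qed.

Lemma coefE' (j j0 : J) : (E j (tag j0))`_(tagged j0) = (j == j0)%:R.
Proof. by case: j0 => i0 k0; exact: coefE. Qed.

Lemma sizeE (j : J) i : (size (E j i) < size (Ps i))%N.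
Proof.
rewrite /E; case: j => i1 k1 /=; case: eqVneq => [<-|_].
  rewrite size_polyXn; apply: leq_ltn_trans (ltn_ord k1) _.
  by rewrite ltn_predL size_poly_gt0 Ps0.
by rewrite size_poly0 size_poly_gt0 Ps0.
Qed.

Lemma S_le_N :
  (forall Rs : 'I_n -> {poly F}, (forall i, size (Rs i) < size (Ps i))%N ->
     exists2 A : {poly F}, (size A <= N)%N & forall i, skr A (Ps i) = Rs i) ->
  (S <= N)%N.
Proof.
move=> surj.
have [A HA] : exists A : J -> {poly F}, forall j,
    (size (A j) <= N)%N /\ forall i, skr (A j) (Ps i) = E j i.
  apply: (@fin_all_exists J (fun _ => {poly F}) (fun j A => (size A <= N)%N /\ forall i, skr A (Ps i) = E j i)) => j; have [A hA hA'] := surj (E j) (sizeE j).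
  by exists A.
rewrite -cardJ -[X in (_ <= X)%N]card_ord.
apply: (@indep_le _ D _ _ (fun (j' : 'I_#|{: J}|) (m : 'I_N) => (A (enum_val j'))`_m)) => l Hl.
set B := \sum_(j' < #|{: J}|) l j' *: A (enum_val j').
have B0 : B = 0.
  apply/polyP => k; rewrite coef0.
  have [hk|hk] := ltnP k N.
    rewrite /B coef_sum -[RHS](Hl (Ordinal hk)).
    by apply: eq_bigr => j' _; rewrite coefZ.
  apply: nth_default; apply: leq_trans hk.
  by apply: size_sum_le => j' _; apply: leq_trans (size_scale_leq _ _) _; case: (HA (enum_val j')).
move=> j0'; set j0 := enum_val j0'.
have : skr B (Ps (tag j0)) = 0 by rewrite B0 skrem0 ?Ps0.
rewrite /B (skrem_sum D SD _ _ _ _ (Ps0 _)) => /(congr1 (fun p : {poly F} => p`_(tagged j0))).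
rewrite coef_sum coef0 (bigD1 j0') //= big1.
  by rewrite coefZ (HA _).2 coefE' eqxx mulr1 addr0.
move=> j' ne; rewrite coefZ (HA _).2 coefE'.
have -> : (enum_val j' == j0) = false.
  apply/negP => /eqP e; move: ne; rewrite -(enum_valK j') e /j0 enum_valK.
  by rewrite eqxx.
by rewrite mulr0.
Qed.

Lemma surj_of_eq : N = S ->
  forall Rs : 'I_n -> {poly F}, (forall i, size (Rs i) < size (Ps i))%N ->
     exists2 A : {poly F}, (size A <= N)%N & forall i, skr A (Ps i) = Rs i.
Proof.
move=> eNS Rs hRs; apply: NNPP => Hno.
have : (N.+1 <= #|{: J}|)%N.
  apply: (@indep_le _ D _ _ (fun (m : 'I_N.+1) j => if unlift ord_max m is Some m'
      then cR (fun i => skr 'X^m' (Ps i)) j else cR Rs j)) => l Hl.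
  set mu := l ord_max.
  set B := \sum_(m < N) l (lift ord_max m) *: 'X^m.
  have HB : forall j, mu * cR Rs j + cR (fun i => skr B (Ps i)) j = 0.
    move=> j; rewrite -(Hl j) (bigD1_ord ord_max) //= unlift_none cR_comb.
    by congr (_ + _); apply: eq_bigr => m _; rewrite liftK.
  have [mu0|mu0] := eqVneq mu 0.
    have B0 : B = 0.
      apply: ker0; first exact: size_Xsum.
      apply: (coord_eq (Rs' := fun _ => 0)) => [i|i|j]; rewrite ?size_poly0 ?size_skr //.
      by have := HB j; rewrite mu0 mul0r add0r /cR coef0.
    move=> m; case: (unliftP ord_max m) => [m'|] ->; last by [].
    by rewrite -(coefXsum (fun m => l (lift ord_max m)) m') -/B B0 coef0.
  exfalso; apply: Hno.
  exists (- mu^-1 *: B).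
    by apply: leq_trans (size_scale_leq _ _) (size_Xsum _).
  apply: coord_eq => [i|i|j]; rewrite ?size_skr //; first exact: ltn_leq_pred.
  have := HB j; move/eqP; rewrite addrC addr_eq0 => /eqP.
  rewrite /cR -[_ *: B]addr0 (skremL D SD _ _ _ (Ps0 _)) skrem0 ?Ps0 // addr0 coefZ => ->.
  by rewrite mulNr mulrN opprK mulKr //; exact: D.
by rewrite cardJ -eNS ltnn.
Qed.

Lemma Pind_iff : (exists2 H, H != 0 & in_I sigma delta Ps H) ->
  P_independent sigma delta Ps <-> N = S.
Proof.
move=> Hex; split.
  case=> _ [G' FO' e]; rewrite -e; congr (_.-1).
  case: FO => mG IG minG; case: FO' => mG' IG' minG'.
  by apply/eqP; rewrite eqn_leq minG ?minG' ?monic_neq0.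
by move=> e; split => //; exists G.
Qed.

End Main.

Unset Implicit Arguments.
Set Strict Implicit.

Theorem mainTheorem3 (F : unitRingType) (sigma : {rmorphism F -> F}) (delta : F -> F)
  (n : nat) (Ps : 'I_n -> {poly F}) (G : {poly F}) :
  is_division_ring F ->
  is_sigma_derivation sigma delta ->
  injective Ps ->
  (forall i, 1 < size (Ps i))%N ->
  (exists2 H, H != 0 & in_I sigma delta Ps H) ->
  is_FOmega sigma delta Ps G ->
  let N := (size G).-1 in
  let skr := skrem sigma delta in
  (P_independent sigma delta Ps <->
   [/\ (forall (a : F) (A B : {poly F}), (size A <= N)%N -> (size B <= N)%N ->
          forall i, skr (a *: A + B) (Ps i) = a *: skr A (Ps i) + skr B (Ps i)),
       (forall A B : {poly F}, (size A <= N)%N -> (size B <= N)%N ->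
          (forall i, skr A (Ps i) = skr B (Ps i)) -> A = B) &
       (forall Rs : 'I_n -> {poly F}, (forall i, size (Rs i) < size (Ps i))%N ->
          exists2 A : {poly F}, (size A <= N)%N & forall i, skr A (Ps i) = Rs i)])
  /\
  (P_independent sigma delta Ps <->
   (forall Rs : 'I_n -> {poly F}, (forall i, size (Rs i) < size (Ps i))%N ->
      exists A : {poly F}, forall i, skr A (Ps i) = Rs i)).
Proof.
move=> D SD _ Psz Hex FO N skr.
have Ps0' := Ps0 Psz.
have PI := Pind_iff FO Hex.
split; split.
- move/PI => e; split.
  + by move=> a A B _ _ i; apply: skremL.
  + exact: inj_phi.
  + exact: surj_of_eq.
- case=> _ _ surj; apply/PI; apply/eqP; rewrite eqn_leq.
  by rewrite (N_le_S D SD Psz FO) (S_le_N D SD Psz).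
- move/PI => e Rs h; have [A _ HA] := surj_of_eq D SD Psz FO e h.
  by exists A.
move=> surj; apply/PI; apply/eqP; rewrite eqn_leq (N_le_S D SD Psz FO).
apply: (S_le_N D SD Psz) => Rs h; have [A HA] := surj Rs h.
have G0' : G != 0 by case: FO => /monic_neq0.
have [Q [HQ HR]] := skremP D SD A G0'.
exists (skr A G); first exact: ltn_leq_pred.
move=> i; rewrite -HA {2}HQ /skr -[skmul _ _ Q G]scale1r (skremL D SD _ _ _ (Ps0' i)).
have -> : skrem sigma delta (skmul sigma delta Q G) (Ps i) = 0.
  by apply/(skrem_dvd D SD _ (Ps0' i)); apply: (I_closed SD FO).
by rewrite scaler0 add0r.
Qed.
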